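(* Let $\lambda>0$, $a>0$ and $E\in\mathbb{R}$ be fixed, and for $\varepsilon>0$ consider the linear slow-fast system of SDEs \[ dX = -\lambda(X+Y)\,dt + E\sin(at)\,dt + dW_x,\qquad dY = \tfrac{1}{\varepsilon}(X-Y)\,dt + \tfrac{1}{\sqrt{\varepsilon}}\,dW_y, \] together with the approximate macroscopic model \[ d\bar X = -2\lambda \bar X\,dt + E\sin(at)\,dt + dW_x . \] The means $(\mu_X(t),\mu_Y(t))=(\mathbb{E}[X_t],\mathbb{E}[Y_t])$ satisfy the linear ODE $\mu_X'=-\lambda(\mu_X+\mu_Y)+E\sin(at)$, $\mu_Y'=\frac{1}{\varepsilon}(\mu_X-\mu_Y)$, and $\bar\mu_X(t)=\mathbb{E}[\bar X_t]$ satisfies $\bar\mu_X'=-2\lambda\bar\mu_X+E\sin(at)$. Let $\mu_X^{\mathrm{per},\varepsilon}$ denote the $X$-component of the unique $2\pi/a$-periodic solution of the first ODE system, and $\bar\mu_X^{\mathrm{per}}$ the unique $2\pi/a$-periodic solution of the second ODE. Then there exist constants $C>0$ and $\varepsilon_0>0$ (depending on $\lambda,a,E$) such that for all $\varepsilon\in(0,\varepsilon_0)$, \[ \Big\|\mu_X^{\mathrm{per},\varepsilon}-\bar\mu_X^{\mathrm{per}}\Big\|_{L^2([0,2\pi/a])}\le C\,\varepsilon, \] i.e. the $L_2$-error between the slow means of the full system and of the approximate macroscopic model decreases (at least) linearly to zero as $\varepsilon\to 0$.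
   Context: $W_x$ and $W_y$ are independent standard one-dimensional Brownian motions. The ''periodic solution'' is the invariant periodic orbit of the mean dynamics (the mean evolution started on the invariant curve), on which the error is measured in $L_2$ over one period of the forcing. *)

(* Defs.v *)
From Stdlib Require Import Reals.
From Coquelicot Require Import Coquelicot.
Open Scope R_scope.

(* L^2 norm of f on the interval [0, T] (used for continuous f, where the
   Riemann integral coincides with the Lebesgue integral). *)
Definition L2norm_0T (f : R -> R) (T : R) : R :=
  sqrt (RInt (fun t => (f t) ^ 2) 0 T).

Definition forcing_period (a : R) : R := 2 * PI / a.

Definition full_mean_solution (lam a E eps : R) (muX muY : R -> R) : Prop :=
  (forall t, is_derive muX t (- lam * (muX t + muY t) + E * sin (a * t))) /\
  (forall t, is_derive muY t (/ eps * (muX t - muY t))).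

Definition macro_mean_solution (lam a E : R) (mub : R -> R) : Prop :=
  forall t, is_derive mub t (- 2 * lam * mub t + E * sin (a * t)).

Definition periodic_with (T : R) (f : R -> R) : Prop :=
  forall t, f (t + T) = f t.

(* Main.v *)
Require Import Defs.
From Stdlib Require Import Reals.
From Coquelicot Require Import Coquelicot.
Open Scope R_scope.
From Stdlib Require Import Lra Lia ZArith Psatz.

Lemma per_nat (f : R -> R) T : (forall t, f (t + T) = f t) ->
  forall n s, f (s + INR n * T) = f s /\ f (s - INR n * T) = f s.
Proof.
  intros HP n; induction n as [|n IH]; intros s.
  - simpl. split; f_equal; ring.
  - rewrite S_INR. destruct (IH s) as [H1 H2]. split.
    + replace (s + (INR n + 1) * T) with ((s + INR n * T) + T) by ring.
      rewrite HP; auto.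
    + rewrite <- H2. rewrite <- (HP (s - (INR n + 1) * T)). f_equal; ring.
Qed.

Lemma per_int (f : R -> R) T : (forall t, f (t + T) = f t) ->
  forall k s, f (s + IZR k * T) = f s.
Proof.
  intros HP k s.
  destruct (Z.le_gt_cases 0 k) as [Hk|Hk].
  - rewrite <- (Z2Nat.id k Hk). rewrite <- INR_IZR_INZ. apply per_nat; auto.
  - assert (Hk' : (0 <= - k)%Z) by lia.
    replace k with (- Z.of_nat (Z.to_nat (- k)))%Z by (rewrite Z2Nat.id; lia).
    rewrite opp_IZR, <- INR_IZR_INZ.
    replace (s + - INR (Z.to_nat (- k)) * T) with (s - INR (Z.to_nat (- k)) * T) by ring.
    apply per_nat; auto.
Qed.

Lemma per_max (f df : R -> R) T : 0 < T -> (forall t, f (t + T) = f t) ->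
  (forall t, is_derive f t (df t)) ->
  exists t0, (forall t, f t <= f t0) /\ df t0 = 0.
Proof.
  intros HT HP HD.
  destruct (continuity_ab_maj f 0 T) as [M [HM HMr]]; [lra| |].
  { intros c _. apply continuity_pt_filterlim. apply (@ex_derive_continuous R_AbsRing R_NormedModule).
    eexists; apply HD. }
  assert (Hall : forall t, f t <= f M).
  { intros t. set (k := Int_part (t / T)).
    destruct (base_Int_part (t / T)) as [B1 B2]. fold k in B1, B2.
    set (s := t - IZR k * T).
    assert (Hs : 0 <= s <= T).
    { unfold s. split.
      - assert (IZR k * T <= t / T * T) by (apply Rmult_le_compat_r; lra).
        replace (t / T * T) with t in H by (field; lra). lra.
      - assert (t / T * T <= (IZR k + 1) * T) by (apply Rmult_le_compat_r; lra).
        replace (t / T * T) with t in H by (field; lra). lra. }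
    replace t with (s + IZR k * T) by (unfold s; ring).
    rewrite (per_int f T HP). apply HM; auto. }
  exists M. split; auto.
  assert (HL := proj1 (is_derive_Reals f M (df M)) (HD M)).
  pose (pr := exist (fun l => derivable_pt_lim f M l) (df M) HL : derivable_pt f M).
  change (df M) with (derive_pt f M pr).
  apply (deriv_maximum f (M - 1) (M + 1) M pr); try lra.
  intros x _ _; apply Hall.
Qed.

Lemma der_eq (f : R -> R) x l l' : is_derive f x l -> l = l' -> is_derive f x l'.
Proof. intros H <-; exact H. Qed.

Lemma sq_der (f : R -> R) t d : is_derive f t d ->
  is_derive (fun t => f t * f t) t (2 * f t * d).
Proof.
  intros H. eapply der_eq. apply (@is_derive_mult R_AbsRing f f t d d H H).
  intros; apply Rmult_comm. simpl. change plus with Rplus; change mult with Rmult. ring.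
Qed.

Lemma sub_der (f g : R -> R) t d e : is_derive f t d -> is_derive g t e ->
  is_derive (fun t => f t - g t) t (d - e).
Proof. intros H1 H2. apply (@is_derive_minus R_AbsRing R_NormedModule f g t d e H1 H2). Qed.

Lemma add_der (f g : R -> R) t d e : is_derive f t d -> is_derive g t e ->
  is_derive (fun t => f t + g t) t (d + e).
Proof. intros H1 H2. apply (@is_derive_plus R_AbsRing R_NormedModule f g t d e H1 H2). Qed.

Theorem mainTheorem1 (lam a E : R) (Hlam : 0 < lam) (Ha : 0 < a) :
  exists C eps0 : R, 0 < C /\ 0 < eps0 /\
    forall eps : R, 0 < eps < eps0 ->
    forall muX muY mub : R -> R,
      full_mean_solution lam a E eps muX muY ->
      periodic_with (forcing_period a) muX ->
      periodic_with (forcing_period a) muY ->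
      macro_mean_solution lam a E mub ->
      periodic_with (forcing_period a) mub ->
      L2norm_0T (fun t => muX t - mub t) (forcing_period a) <= C * eps.
Proof.
  set (T := forcing_period a).
  assert (HT : 0 < T).
  { unfold T, forcing_period. apply Rdiv_lt_0_compat; [|lra]. pose proof PI_RGT_0; lra. }
  set (K := (1 + lam) * (E * E) / (lam * lam)).
  set (M2 := 3 * (2 * lam * lam * K + E * E)).
  assert (HK : 0 <= K).
  { unfold K. apply Rmult_le_pos. apply Rmult_le_pos; nra.
    apply Rlt_le, Rinv_0_lt_compat; nra. }
  assert (HM2 : 0 <= M2) by (unfold M2; nra).
  exists (sqrt (T * M2) + 1), 1. split; [pose proof (sqrt_pos (T * M2)); lra|]. split; [lra|].
  intros eps Heps muX muY mub [HX HY] PX PY HB PB.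
  fold T in PX, PY, PB.
  set (dX := fun t => - lam * (muX t + muY t) + E * sin (a * t)).
  assert (BX : forall t, muX t * muX t <= K).
  { set (V := fun t => muX t * muX t + eps * lam * (muY t * muY t)).
    destruct (per_max V (fun t => 2 * muX t * dX t + eps * lam * (2 * muY t * (/ eps * (muX t - muY t)))) T HT)
      as [t0 [Hmax Hd]].
    - intros t; unfold V; rewrite !PX, !PY; auto.
    - intros t. unfold V. apply add_der. apply sq_der, HX.
      apply is_derive_scal. apply sq_der, HY.
    - assert (Hd' : lam * (muX t0 * muX t0 + muY t0 * muY t0) = E * sin (a * t0) * muX t0).
      { unfold dX in Hd. replace (eps * lam * (2 * muY t0 * (/ eps * (muX t0 - muY t0))))
          with (lam * (2 * muY t0 * (muX t0 - muY t0))) in Hd by (field; lra). nra. }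
      set (x := muX t0) in *. set (y := muY t0) in *. set (s := sin (a * t0)) in *.
      assert (Hs : s * s <= 1) by (pose proof (SIN_bound (a * t0)); fold s in H; nra).
      assert (H1 : lam * lam * (x * x + y * y) <= E * E).
      { assert (lam * lam * (x*x+y*y) = lam * E * s * x) by (replace (lam*lam*(x*x+y*y)) with (lam*(lam*(x*x+y*y))) by ring; rewrite Hd'; ring).
        assert (2 * (lam * E * s * x) <= lam * lam * x * x + E * E * (s * s)) by (pose proof (Rle_0_sqr (lam * x - E * s)); unfold Rsqr in *; nra).
        assert (E * E * (s * s) <= E * E) by nra. nra. }
      assert (Hxy : x * x + y * y <= E * E / (lam * lam)).
      { apply Rmult_le_reg_l with (lam * lam); [nra|]. unfold Rdiv.
        replace (lam * lam * (E * E * / (lam * lam))) with (E * E) by (field; lra). lra. }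
      intros t. apply Rle_trans with (V t0).
      + apply Rle_trans with (V t); [|apply Hmax]. unfold V.
        assert (0 <= eps * lam * (muY t * muY t)) by (apply Rmult_le_pos; nra). lra.
      + unfold V. fold x y. unfold K.
        replace ((1 + lam) * (E * E) / (lam * lam)) with ((1 + lam) * (E * E / (lam * lam))) by (field; lra).
        assert (0 <= E * E / (lam * lam)) by nra.
        assert (eps * lam * (y * y) <= lam * (y * y)) by nra. nra. }
  assert (BY : forall t, muY t * muY t <= K).
  { destruct (per_max (fun t => muY t * muY t) (fun t => 2 * muY t * (/ eps * (muX t - muY t))) T HT)
      as [t0 [Hmax Hd]].
    - intros t; rewrite PY; auto.
    - intros t. apply sq_der, HY.
    - assert (Hd' : muY t0 * muY t0 = muY t0 * muX t0).
      { assert (/ eps <> 0) by (apply Rinv_neq_0_compat; lra).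
        assert (muY t0 * (muX t0 - muY t0) = 0).
        { apply Rmult_eq_reg_l with (2 * / eps); [|apply Rmult_integral_contrapositive; split; lra].
          rewrite Rmult_0_r, <- Hd. ring. }
        nra. }
      intros t. apply Rle_trans with (muY t0 * muY t0); [apply Hmax|].
      specialize (BX t0). nra. }
  assert (BdX : forall t, dX t * dX t <= M2).
  { intros t. unfold dX, M2. pose proof (BX t). pose proof (BY t).
    pose proof (SIN_bound (a * t)).
    set (s := sin (a * t)) in *. set (x := muX t) in *. set (y := muY t) in *.
    assert (s * s <= 1) by nra.
    assert (E * s * (E * s) <= E * E) by (replace (E * s * (E * s)) with (E * E * (s * s)) by ring; pose proof (Rle_0_sqr E); unfold Rsqr in *; nra).
    assert (lam * lam * (x * x) <= lam * lam * K) by (apply Rmult_le_compat_l; nra).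
    assert (lam * lam * (y * y) <= lam * lam * K) by (apply Rmult_le_compat_l; nra).
    pose proof (Rle_0_sqr (lam * x - lam * y)). pose proof (Rle_0_sqr (lam * x + E * s)).
    pose proof (Rle_0_sqr (lam * y + E * s)). unfold Rsqr in *. nra. }
  set (Z := fun t => muY t - muX t).
  assert (BZ : forall t, Z t * Z t <= eps * eps * M2).
  { destruct (per_max (fun t => Z t * Z t) (fun t => 2 * Z t * (/ eps * (muX t - muY t) - dX t)) T HT)
      as [t0 [Hmax Hd]].
    - intros t; unfold Z; rewrite PX, PY; auto.
    - intros t. apply sq_der. unfold Z. apply sub_der; [apply HY | apply HX].
    - intros t. apply Rle_trans with (Z t0 * Z t0); [apply Hmax|].
      pose proof (BdX t0). unfold Z in *. set (x := muX t0) in *. set (y := muY t0) in *.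
      set (g := dX t0) in *.
      assert (Hz : (y - x) * (y - x) = - eps * (y - x) * g).
      { assert (2 * (y - x) * (/ eps * (x - y) - g) * eps = 0) by (rewrite Hd; ring).
        replace (2 * (y - x) * (/ eps * (x - y) - g) * eps) with (2 * (- (y - x) * (y - x) - eps * (y - x) * g)) in H0 by (field; lra).
        lra. }
      assert (2 * (- eps * (y - x) * g) <= (y - x) * (y - x) + eps * eps * (g * g)) by nra.
      assert (eps * eps * (g * g) <= eps * eps * M2) by (apply Rmult_le_compat_l; nra).
      nra. }
  set (D := fun t => muX t - mub t).
  assert (BD : forall t, D t * D t <= eps * eps * M2).
  { destruct (per_max (fun t => D t * D t) (fun t => 2 * D t * (dX t - (- 2 * lam * mub t + E * sin (a * t)))) T HT)
      as [t0 [Hmax Hd]].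
    - intros t; unfold D; rewrite PX, PB; auto.
    - intros t. apply sq_der. unfold D. apply sub_der; [apply HX | apply HB].
    - intros t. apply Rle_trans with (D t0 * D t0); [apply Hmax|].
      pose proof (BZ t0). unfold D, Z, dX in *.
      set (x := muX t0) in *. set (y := muY t0) in *. set (b := mub t0) in *.
      assert (Hz : lam * (2 * (x - b) * (x - b) + (x - b) * (y - x)) = 0).
      { rewrite <- (Rmult_0_r (-/2)). rewrite <- Hd. field. }
      assert (2 * (x - b) * (x - b) + (x - b) * (y - x) = 0).
      { apply Rmult_eq_reg_l with lam; [rewrite Hz; ring|lra]. }
      pose proof (Rle_0_sqr ((x - b) + (y - x))). unfold Rsqr in *. nra. }
  unfold L2norm_0T. fold T.
  assert (Hcont : forall t, continuous (fun t => (muX t - mub t) ^ 2) t).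
  { intros t. apply (@ex_derive_continuous R_AbsRing R_NormedModule).
    eexists. apply (is_derive_pow (fun t => muX t - mub t)). apply sub_der; [apply HX|apply HB]. }
  assert (Hle : RInt (fun t => (muX t - mub t) ^ 2) 0 T <= RInt (fun _ => eps * eps * M2) 0 T).
  { apply RInt_le; try lra.
    - apply (@ex_RInt_continuous R_CompleteNormedModule); intros; apply Hcont.
    - apply (@ex_RInt_const R_NormedModule).
    - intros x _. specialize (BD x). unfold D in BD. simpl. lra. }
  rewrite RInt_const in Hle. change (scal (T - 0) (eps * eps * M2)) with ((T - 0) * (eps * eps * M2)) in Hle.
  apply Rle_trans with (sqrt ((T * M2) * (eps * eps))).
  { apply sqrt_le_1_alt. replace (T * M2 * (eps * eps)) with ((T - 0) * (eps * eps * M2)) by ring. exact Hle. }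
  rewrite sqrt_mult; [| nra | nra]. rewrite sqrt_square; [|lra].
  pose proof (sqrt_pos (T * M2)). nra.
Qed.
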